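(* In the setting of the previous statement (sample space $\mathcal{X}\times\mathcal{Y}$, hypothesis set $\mathcal{H}$, learning algorithm $\mathcal{A}$ given by a Markov kernel $\mathcal{P}_{H|S}$, $S\sim\mathcal{P}^n$ i.i.d., $H=\mathcal{A}(S)$ with $\mathcal{P}_{SH}\ll\mathcal{P}_S\mathcal{P}_H$, $0$-$1$ loss, $\eta\in(0,1)$ and $E=\{(s,h):|L_{\mathcal{P}}(h)-L_s(h)|>\eta\}$), fix $\alpha>1$, let $\gamma=\frac{\alpha}{\alpha-1}$ and $\delta\in(0,1)$. If the number of samples $n$ satisfies $$n\ge\frac{I_\alpha(S;\mathcal{A}(S))+\log2+\gamma\log\left(\frac1\delta\right)}{2\eta^2},$$ then $\mathbb{P}((S,\mathcal{A}(S))\in E)\le\delta$.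
   Context: The $0$-$1$ loss is $\ell(h,(x,y))=\mathbb{1}_{h(x)\neq y}$; $L_{\mathcal{P}}(h)=\mathcal{P}(\{(x,y):h(x)\ne y\})$; for $s=((x_i,y_i))_{i=1}^n$, $L_s(h)=\frac1n\sum_{i=1}^n\mathbb{1}_{h(x_i)\ne y_i}$. Sibson's $\alpha$-mutual information is $I_\alpha(S;H)=\min_{Q_H}D_\alpha(\mathcal{P}_{SH}\|\mathcal{P}_SQ_H)$ with $D_\alpha(\mathcal{P}\|\mathcal{Q})=\frac{1}{\alpha-1}\ln\int p^\alpha q^{1-\alpha}d\mu$ the Rényi divergence. Logarithms are natural. *)

(* Defs.v *)
From HB Require Import structures.
From mathcomp Require Import all_boot all_order all_algebra.
From mathcomp Require Import all_classical all_reals all_analysis.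

Set Implicit Arguments.
Unset Strict Implicit.
Unset Printing Implicit Defensive.
Import Order.TTheory GRing.Theory Num.Theory.

Local Open Scope classical_set_scope.
Local Open Scope ring_scope.

Section Defs.
Context (R : realType).

(* Renyi divergence of order alpha (alpha > 1 intended):
   D_alpha(P||Q) = 1/(alpha-1) ln \int (dP/dQ)^alpha dQ  if P << Q,
   and +oo otherwise (for alpha > 1 the integrand p^alpha q^(1-alpha)
   is +oo on a set of positive P-measure where q = 0). *)
Definition renyi_div d (T : measurableType d) (alpha : R)
    (P Q : probability T R) : \bar R :=
  if pselect (P `<< Q) then
    (((alpha - 1)^-1)%:E *
      lne (\int[Q]_x (poweR (Radon_Nikodym (charge_of_finite_measure P) Q x) alpha)))%E
  else +oo%E.

Definition sibson_mi d1 d2 (TS : measurableType d1) (TH : measurableType d2)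
    (alpha : R) (PS : probability TS R) (PSH : probability (TS * TH)%type R) : \bar R :=
  ereal_inf [set renyi_div alpha PSH (PS \x Q)%E | Q in [set: probability TH R]].

Definition pop_risk d (Z : measurableType d) (P : probability Z R)
    (Hty : Type) (err : Hty -> set Z) (h : Hty) : R :=
  fine (P (err h)).

Definition emp_risk (Z : eqType) (n : nat) (Hty : Type) (err : Hty -> set Z)
    (s : n.-tuple Z) (h : Hty) : R :=
  (\sum_(i < n) (`[< err h (tnth s i) >] : nat)%:R) / n%:R.

End Defs.

Definition err01 (X : Type) (Y : eqType) (Hty : Type) (hyp : Hty -> X -> Y)
    (h : Hty) : set (X * Y) := [set z | hyp h z.1 != z.2].

Definition gap_event (R : realType) d (Z : measurableType d)
    (P : probability Z R) (n : nat) (Hty : Type) (err : Hty -> set Z)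
    (eta : R) : set (n.-tuple Z * Hty) :=
  [set sh | eta < `|pop_risk P err sh.2 - emp_risk R err sh.1 sh.2| ].

(* Main.v *)
Require Import Defs.
From HB Require Import structures.
From mathcomp Require Import all_boot all_order all_algebra.
From mathcomp Require Import all_classical all_reals all_analysis.
From mathcomp Require Import lra ring measurable_realfun.
Module Helpers.
Import Order.TTheory GRing.Theory Num.Theory numFieldTopology.Exports numFieldNormedType.Exports.
Local Open Scope classical_set_scope.
Local Open Scope ring_scope.

Lemma convex_min0 (R : realType) (f df ddf : R -> R) :
  (forall x, is_derive x (1:R) f (df x)) ->
  (forall x, is_derive x (1:R) df (ddf x)) ->
  (forall x, 0 <= ddf x) -> df 0 = 0 -> forall t, f 0 <= f t.
Proof.
move=> Hf Hdf Hdd d0 t.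
have cont : forall (g dg : R -> R), (forall x, is_derive x (1:R) g (dg x)) ->
    forall a b : R, {within `[a, b]%classic, continuous g}.
  move=> g dg Hg a b; apply/continuous_subspaceT => x.
  apply: differentiable_continuous; apply/derivable1_diffP.
  by case: (Hg x).
have mono : forall a b, a <= b -> df a <= df b.
  move=> a b ab.
  have [c _ E] := MVT_segment ab (fun x _ => Hdf x) (cont _ _ Hdf a b).
  rewrite -subr_ge0 E; apply: mulr_ge0 => //; by rewrite subr_ge0.
have [t0|t0] := leP 0 t.
  have [c /andP[/= c0 ct] E] := MVT_segment t0 (fun x _ => Hf x) (cont _ _ Hf 0 t).
  move: c0 ct; rewrite !bnd_simp => c0 ct.
  rewrite -subr_ge0 E; apply: mulr_ge0; last by rewrite subr0.
  by rewrite -d0; apply: mono.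
have t0' : t <= 0 by apply: ltW.
have [c /andP[/= c0 ct] E] := MVT_segment t0' (fun x _ => Hf x) (cont _ _ Hf t 0).
move: c0 ct; rewrite !bnd_simp => c0 ct.
rewrite -subr_ge0 -opprB E sub0r mulrN opprK; apply: mulr_le0 => //.
by rewrite -d0; apply: mono.
Qed.

Section H.
Variable R : realType.
Variable p : R.
Hypothesis p01 : 0 <= p <= 1.

Let D (t : R) := 1 - p + p * expR t.
Lemma D_gt0 t : 0 < D t.
Proof.
rewrite /D; case/andP: p01 => p0 p1.
have e := expR_gt0 t.
have [->|pn0] := eqVneq p 1; first by rewrite subrr add0r mul1r.
have : p < 1 by rewrite lt_neqAle pn0 p1.
rewrite -subr_gt0 => h; apply: ltr_wpDr => //; exact: mulr_ge0 (ltW e).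
Qed.

Let dD (t : R) : is_derive t (1:R) D (p * expR t).
Proof.
have -> : D = cst (1 - p) + p *: (expR : R -> R) by apply/funext => x.
by apply: trigger_derive; rewrite add0r.
Qed.

Let phi (t : R) := t * p + t ^+ 2 / 8 - ln (D t).
Let dphi (t : R) := p + t / 4 - p * (expR t / D t).

Let phi_der (t : R) : is_derive t (1:R) phi (dphi t).
Proof.
have -> : phi = (p \*: (id : R -> R)) + ((8^-1 : R) \*: ((id : R -> R) ^+ 2)) - (@ln R \o D).
  by apply/funext => x; rewrite /phi /= mulrC [x ^+ 2 / 8]mulrC.
have h1 := @is_deriveZ R R R (id : R -> R) p t 1 1 (is_derive_id t (1:R)).
have h2 := @is_deriveX R R (id : R -> R) 2 t 1 1 (is_derive_id t (1:R)).
have h3 := @is_deriveZ R R R _ (8^-1 : R) t 1 _ h2.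
have h4 := is_derive1_comp (is_derive1_ln (D_gt0 t)) (dD t).
have h5 := is_deriveB (is_deriveD h1 h3) h4.
apply: (is_derive_eq h5).
rewrite /dphi.
change (p * 1 + 8^-1 * (2 * t ^+ 1 * 1) - (D t)^-1 * (p * expR t) = p + t / 4 - p * (expR t / D t)).
have := D_gt0 t; set d := D t => d0.
field; rewrite lt0r_neq0 //.
Qed.
Let ddphi (t : R) := 4^-1 - p * (expR t * (1 - p)) / (D t) ^+ 2.

Let dphi_der (t : R) : is_derive t (1:R) dphi (ddphi t).
Proof.
have -> : dphi = cst p + ((4^-1 : R) \*: (id : R -> R)) - (p \*: ((expR : R -> R) * (fun y => (D y)^-1))).
  by apply/funext => x; rewrite /dphi /= mulrC.
have h1 := @is_derive_cst R R R p t 1.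
have h2 := @is_deriveZ R R R (id : R -> R) (4^-1 : R) t 1 1 (is_derive_id t (1:R)).
have h3 := is_deriveV (lt0r_neq0 (D_gt0 t)) (dD t).
have h4 := @is_deriveM R R _ _ t 1 _ _ (is_derive_expR t) h3.
have h5 := @is_deriveZ R R R _ p t 1 _ h4.
have h6 := is_deriveB (is_deriveD h1 h2) h5.
apply: (is_derive_eq h6).
rewrite /ddphi.
change (0 + 4^-1 * 1 - p * (expR t * (- (D t ^+ 2)^-1 * (p * expR t)) + (D t)^-1 * expR t) = 4^-1 - p * (expR t * (1 - p)) / D t ^+ 2).
have := D_gt0 t; rewrite /D; set e := expR t => d0.
field; rewrite lt0r_neq0 //.
Qed.

Let ddphi_ge0 t : 0 <= ddphi t.
Proof.
rewrite /ddphi subr_ge0 ler_pdivrMr ?exprn_gt0 ?D_gt0 //.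
have := expR_gt0 t; rewrite /D; set e := expR t => e0.
rewrite -subr_ge0.
have -> : 4^-1 * (1 - p + p * e) ^+ 2 - p * (e * (1 - p)) = 4^-1 * (1 - p - p * e) ^+ 2 by field.
by apply: mulr_ge0; rewrite ?invr_ge0 ?sqr_ge0.
Qed.

Lemma hoeffding_lemma t : 1 - p + p * expR t <= expR (t * p + t ^+ 2 / 8).
Proof.
have := @convex_min0 R phi dphi ddphi phi_der dphi_der ddphi_ge0.
have d0 : dphi 0 = 0 by rewrite /dphi /D expR0 mulr1 subrK; field.
move=> /(_ d0 t).
have -> : phi 0 = 0 by rewrite /phi /D expR0 mulr1 subrK ln1; field.
rewrite /phi subr_ge0 => H.
rewrite -[X in X <= _](lnK (D_gt0 t)).
by rewrite ler_expR.
Qed.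

End H.

Section C.
Variable R : realType.
Variable p : R.
Hypothesis p01 : 0 <= p <= 1.
Variable n : nat.

Definition wgt (f : {ffun 'I_n -> bool}) : R := \prod_i (if f i then p else 1 - p).
Definition cnt (f : {ffun 'I_n -> bool}) : R := \sum_i ((f i : nat)%:R : R).

Lemma wgt_ge0 f : 0 <= wgt f.
Proof.
case/andP: p01 => p0 p1.
rewrite /wgt; apply: prodr_ge0 => i _; case: (f i) => //; by rewrite subr_ge0.
Qed.

Lemma mgf t : \sum_f wgt f * expR (t * cnt f) = (1 - p + p * expR t) ^+ n.
Proof.
transitivity (\sum_(f : {ffun 'I_n -> bool}) \prod_i (if f i then p * expR t else 1 - p)).
  apply: eq_bigr => f _.
  rewrite /wgt /cnt mulr_sumr expR_sum -big_split /=.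
  apply: eq_bigr => i _; case: (f i); by rewrite /= ?mulr1n ?mulr0n ?mulr1 ?mulr0 ?expR0 ?mulr1.
rewrite -(bigA_distr_bigA (fun (i : 'I_n) (b : bool) => if b then p * expR t else 1 - p)) /=.
rewrite (eq_bigr (fun _ => 1 - p + p * expR t)); last by move=> i _; rewrite big_bool /= addrC.
by rewrite prodr_const card_ord.
Qed.

Lemma chernoff (S : pred {ffun 'I_n -> bool}) t a :
  (forall f, S f -> t * a <= t * cnt f) ->
  \sum_(f | S f) wgt f <= expR (- (t * a) + n%:R * (t * p + t ^+ 2 / 8)).
Proof.
move=> HS.
apply: (@le_trans _ _ (\sum_(f | S f) wgt f * expR (t * cnt f - t * a))).
  apply: ler_sum => f Sf.
  rewrite -[X in X <= _]mulr1; apply: ler_wpM2l; first exact: wgt_ge0.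
  by rewrite -expR0 ler_expR subr_ge0 HS.
apply: (@le_trans _ _ (\sum_f wgt f * expR (t * cnt f - t * a))).
  rewrite [X in _ <= X](bigID S) /= lerDl; apply: sumr_ge0 => f _.
  by apply: mulr_ge0; [exact: wgt_ge0| exact: ltW (expR_gt0 _)].
under eq_bigr do rewrite expRD mulrA.
rewrite -mulr_suml mgf expRD mulrC expRM_natl.
apply: ler_wpM2l; first exact: ltW (expR_gt0 _).
apply: lerXn2r; rewrite ?nnegrE ?expR_ge0 //; last exact: hoeffding_lemma.
by apply: ltW; apply: D_gt0.
Qed.

Lemma wgt_sum : \sum_f wgt f = 1.
Proof.
have := mgf 0; rewrite expR0 mulr1 subrK expr1n => <-.
by apply: eq_bigr => f _; rewrite mul0r expR0 mulr1.
Qed.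

Lemma hoeffding_finite (eta : R) : 0 < eta ->
  \sum_(f | eta < `|p - cnt f / n%:R|) wgt f <= 2 * expR (- (2 * n%:R * eta ^+ 2)).
Proof.
move=> eta0.
have tot : \sum_(f | eta < `|p - cnt f / n%:R|) wgt f <= 1.
  apply: (@le_trans _ _ (\sum_f wgt f)); last by rewrite wgt_sum.
  rewrite [X in _ <= X](bigID (fun f => eta < `|p - cnt f / n%:R|)) /=.
  rewrite -[X in X <= _]addr0; apply: lerD => //.
  by apply: sumr_ge0 => f _; exact: wgt_ge0.
have [n0|npos] := eqVneq n 0.
  rewrite [in X in _ <= X]n0 mulr0 mul0r oppr0 expR0 mulr1; apply: le_trans tot _; lra.
have nR : 0 < (n%:R : R) by rewrite ltr0n lt0n.
rewrite (bigID (fun f => n%:R * (p + eta) <= cnt f)) /= mulr2n mulrDl mul1r.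
apply: lerD.
  apply: le_trans (@chernoff (fun f => (eta < `|p - cnt f / n%:R|) && (n%:R * (p + eta) <= cnt f)) (4 * eta) (n%:R * (p + eta)) _) _.
    by move=> f /andP[_ h]; apply: ler_wpM2l => //; lra.
  by rewrite le_eqVlt; apply/orP; left; apply/eqP; congr expR; field.
apply: le_trans (@chernoff (fun f => (eta < `|p - cnt f / n%:R|) && ~~ (n%:R * (p + eta) <= cnt f)) (- (4 * eta)) (n%:R * (p - eta)) _) _.
  move=> f /andP[h1 h2]; rewrite !mulNr lerN2; apply: ler_wpM2l; first lra.
  move: h1; rewrite ltr_normr => /orP[h1|h1].
    have : cnt f / n%:R < p - eta by lra.
    by rewrite ltr_pdivrMr // => h; apply: ltW; rewrite mulrC.
  have : p + eta < cnt f / n%:R by lra.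
  rewrite ltr_pdivlMr // => h; move: h2; rewrite mulrC; move/negP; case; exact: ltW.
by rewrite le_eqVlt; apply/orP; left; apply/eqP; congr expR; field.
Qed.
End C.

Section S.
Variables (R : realType) (dZ : measure_display) (Z : measurableType dZ).
Variable (P : probability Z R) (n : nat) (Pn : probability (n.-tuple Z) R).
Hypothesis HPn : forall A : 'I_n -> set Z, (forall i, measurable (A i)) ->
     Pn [set s | forall i, A i (tnth s i)] = (\prod_(i < n) P (A i))%E.
Variables (A : set Z) (mA : measurable A).

Let pA := fine (P A).
Let p01 : 0 <= pA <= 1.
Proof.
rewrite /pA fine_ge0 ?measure_ge0 //=.
by rewrite -lee_fin fineK ?fin_num_measure ?probability_le1.
Qed.

Let B (f : {ffun 'I_n -> bool}) (i : 'I_n) := if f i then A else ~` A.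
Let mB f i : measurable (B f i).
Proof. by rewrite /B; case: (f i) => //; exact: measurableC. Qed.
Let Rf (f : {ffun 'I_n -> bool}) := [set s : n.-tuple Z | forall i, B f i (tnth s i)].

Let mRf f : measurable (Rf f).
Proof.
have -> : Rf f = \bigcap_(i in [set: 'I_n]) ([set: n.-tuple Z] `&` ((fun s => tnth s i) @^-1` B f i)).
  apply/seteqP; split => s.
    by move=> H i _; split => //; exact: H.
  by move=> H i; have [] := H i I.
apply: fin_bigcap_measurable; first exact: finite_finset.
move=> i _; exact: measurable_tnth.
Qed.

Let PnR f : Pn (Rf f) = (@wgt R pA n f)%:E.
Proof.
rewrite /Rf HPn // /wgt -prodEFin; apply: eq_bigr => i _.
rewrite /B; case: (f i).
  by rewrite /pA fineK ?fin_num_measure.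
by rewrite probability_setC // /pA EFinB fineK ?fin_num_measure.
Qed.

Lemma section_bound (eta : R) : 0 < eta ->
  measurable [set s : n.-tuple Z | eta < `|pA - (\sum_(i < n) (`[< A (tnth s i) >] : nat)%:R) / n%:R|] ->
  (Pn [set s : n.-tuple Z | (eta < `|pA - (\sum_(i < n) (`[< A (tnth s i) >] : nat)%:R) / n%:R|)%R]
   <= (2 * expR (- (2 * n%:R * eta ^+ 2)))%:E)%E.
Proof.
move=> eta0 mS.
pose bad (f : {ffun 'I_n -> bool}) := eta < `|pA - @cnt R n f / n%:R|.
pose F (k : 'I_#|@predT {ffun 'I_n -> bool}|) := Rf (@enum_val {ffun 'I_n -> bool} predT k).
have sub : [set s : n.-tuple Z | eta < `|pA - (\sum_(i < n) (`[< A (tnth s i) >] : nat)%:R) / n%:R|]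
   `<=` \big[setU/set0]_(k < #|@predT {ffun 'I_n -> bool}| | bad (@enum_val {ffun 'I_n -> bool} predT k)) F k.
  move=> s Hs.
  pose fs : {ffun 'I_n -> bool} := [ffun i => `[< A (tnth s i) >]].
  have cs : @cnt R n fs = \sum_(i < n) (`[< A (tnth s i) >] : nat)%:R.
    by apply: eq_bigr => i _; rewrite ffunE.
  have inR : Rf fs s.
    move=> i; rewrite /B ffunE; case: asboolP => //.
  have k0 : bad (@enum_val {ffun 'I_n -> bool} predT (enum_rank fs)).
    by rewrite enum_rankK /bad cs.
  rewrite (bigD1 (enum_rank fs)) //=; left.
  by rewrite /F enum_rankK.
apply: (@le_trans _ _ (Pn (\big[setU/set0]_(k < #|@predT {ffun 'I_n -> bool}| | bad (@enum_val {ffun 'I_n -> bool} predT k)) F k))).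
  apply: le_measure sub; first by rewrite inE.
  by rewrite inE; apply: bigsetU_measurable => k _; exact: mRf.
rewrite measure_bigsetU_ord; last 2 first.
- by move=> k; exact: mRf.
- move=> i j _ _ [s [Hi Hj]].
  apply: enum_val_inj; apply/ffunP => l.
  have := Hi l; have := Hj l; rewrite /B.
  by case: (enum_val i l); case: (enum_val j l) => //= + /[swap].
rewrite /F (_ : (\sum_(k < _ | _) Pn (Rf (enum_val k)))%E = (\sum_(f in predT | bad f) Pn (Rf f))%E); last by rewrite big_enum_val_cond.
under eq_bigr do rewrite PnR.
rewrite sumEFin lee_fin.
apply: le_trans (@hoeffding_finite R pA p01 n eta eta0).
by rewrite le_eqVlt; apply/orP; left; apply/eqP; apply: eq_bigl => f.
Qed.
End S.

Lemma holder_event (R : realType) d (T : measurableType d) (mu : {measure set T -> \bar R})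
  (g : T -> R) (E : set T) (a K m : R) :
  measurable_fun setT g -> measurable E -> 1 < a -> (forall x, 0 <= g x) ->
  (\int[mu]_x ((g x) `^ a)%:E = K%:E)%E -> mu E = m%:E ->
  (\int[mu]_(x in E) (g x)%:E <= (K `^ a^-1 * m `^ (1 - a^-1))%:E)%E.
Proof.
move=> mg mE a1 g0 HK Hm.
have a0 : 0 < a by lra.
have q0 : 0 < (1 - a^-1)^-1.
  rewrite invr_gt0 subr_gt0 invf_lt1 //.
have aq : a^-1 + ((1 - a^-1)^-1)^-1 = 1 by rewrite invrK addrC subrK.
have mi : measurable_fun setT (\1_E : T -> R) by exact: measurable_indic.
have H := hoelder mu mg mi a0 q0 aq.
rewrite Lnorm1 in H.
have -> : (\int[mu]_(x in E) (g x)%:E = \int[mu]_x `|(EFin \o (g \* \1_E)%R) x|)%E.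
  rewrite integral_mkcond; apply: eq_integral => x _.
  rewrite /patch /= indicE; case: ifP => xE; rewrite ?mulr1 ?mulr0 /=.
    by rewrite ger0_norm.
  by rewrite normr0.
apply: (le_trans H).
rewrite unlock.
have -> : (\int[mu]_x `|(EFin \o g) x| `^ a = K%:E)%E.
  rewrite -HK; apply: eq_integral => x _ /=.
  by rewrite ger0_norm.
have -> : (\int[mu]_x `|(EFin \o \1_E) x| `^ (1 - a^-1)^-1 = m%:E)%E.
  rewrite -Hm -[E in mu E]setIT -integral_indic //; apply: eq_integral => x _ /=.
  rewrite indicE; case: (x \in E) => /=.
    by rewrite normr1 powR1.
  by rewrite normr0 powR0 // gt_eqF.
by rewrite !poweR_EFin invrK -EFinM.
Qed.

Lemma prod_bound (R : realType) d1 d2 (T1 : measurableType d1) (T2 : measurableType d2)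
  (P1 : probability T1 R) (Q : probability T2 R) (E : set (T1 * T2)) (b : R) :
  measurable E -> (forall h, P1 (ysection E h) <= b%:E)%E ->
  ((P1 \x Q) E <= b%:E)%E.
Proof.
move=> mE hb.
rewrite (@product_measure_unique _ _ _ _ R P1 Q (P1 \x^ Q)%E) //; last first.
  by move=> A B mA mB; apply: product_measure2E.
apply: (@le_trans _ _ (\int[Q]_h (cst b%:E) h)%E).
  apply: ge0_le_integral => //.
  - exact: measurable_fun_ysection.
  - by move=> h ?; exact: hb.
rewrite integral_cst // le_eqVlt; apply/orP; left; apply/eqP.
rewrite -[RHS]mule1; congr (_ * _)%E; exact: probability_setT.
Qed.

Lemma renyi_lb (R : realType) d (T : measurableType d) (Pr mu : probability T R)
  (E : set T) (alpha b : R) :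
  measurable E -> 1 < alpha -> 0 < b -> (mu E <= b%:E)%E -> 0 < fine (Pr E) ->
  (((alpha / (alpha - 1)) * ln (fine (Pr E)) - ln b)%:E <= renyi_div alpha Pr mu)%E.
Proof.
move=> mE a1 b0 hb p0.
rewrite /renyi_div; case: pselect => [ac|nac]; last by rewrite leey.
set f := Radon_Nikodym (charge_of_finite_measure Pr) mu.
have ff x : f x \is a fin_num by exact: Radon_Nikodym_fin_num.
have mf : measurable_fun setT f by apply: measurable_int; exact: Radon_Nikodym_integrable.
pose g x := fine (f x).
have fg x : f x = (g x)%:E by rewrite /g fineK.
pose gp x := Num.max (g x) 0.
have gp0 x : 0 <= gp x by rewrite /gp le_max lexx orbT.
have mg : measurable_fun setT g by exact: measurableT_comp.
have mgp : measurable_fun setT gp by apply: measurable_maxr.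
have PE : (Pr E <= \int[mu]_(x in E) (gp x)%:E)%E.
  have PE0 : Pr E = (\int[mu]_(x in E) f x)%E := @Radon_Nikodym_integral _ _ _ (charge_of_finite_measure Pr) mu E ac mE.
  rewrite PE0 integralE.
  apply: (@le_trans _ _ (\int[mu]_(x in E) f^\+ x)%E).
    rewrite -[X in (_ <= X)%E]sube0; apply: leeB => //.
    by apply: integral_ge0 => x _; exact: funeneg_ge0.
  rewrite le_eqVlt; apply/orP; left; apply/eqP.
  by apply: eq_integral => x _; rewrite funeposE fg /gp EFin_max.
set M := (\int[mu]_x poweR (f x) alpha)%E.
have M0 : (0 <= M)%E by apply: integral_ge0 => x _; exact: poweR_ge0.
have ca : (0 < (alpha - 1)^-1) by rewrite invr_gt0 subr_gt0.
have [Mfin|Minf] := boolP (M \is a fin_num); last first.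
  have -> : M = +oo%E by move: Minf; rewrite ge0_fin_numE // -leNgt leye_eq => /eqP.
  by rewrite /= mulry gtr0_sg // mul1e leey.
set Mr := fine M.
have MrE : M = Mr%:E by rewrite /Mr fineK.
have mgpa : measurable_fun setT (fun x => ((gp x) `^ alpha)%:E).
  by apply/measurable_EFinP; apply: (@measurableT_comp _ _ _ _ _ _ (@powR R ^~ alpha)).
have KM : (\int[mu]_x ((gp x) `^ alpha)%:E <= M)%E.
  rewrite /M; under [X in (_ <= X)%E]eq_integral do rewrite fg poweR_EFin.
  apply: ge0_le_integral => //.
  - by move=> x _; rewrite lee_fin powR_ge0.
  - by apply/measurable_EFinP; apply: (@measurableT_comp _ _ _ _ _ _ (@powR R ^~ alpha)).
  move=> x _; rewrite lee_fin /gp /Order.max; case: ifP => // _.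
  rewrite powR0 ?powR_ge0 // gt_eqF //; lra.
have Kfin : (\int[mu]_x ((gp x) `^ alpha)%:E)%E \is a fin_num.
  rewrite ge0_fin_numE; last by apply: integral_ge0 => x _; rewrite lee_fin powR_ge0.
  by apply: le_lt_trans KM _; rewrite MrE ltry.
set K := fine (\int[mu]_x ((gp x) `^ alpha)%:E)%E.
have KE : (\int[mu]_x ((gp x) `^ alpha)%:E)%E = K%:E by rewrite /K fineK.
have K0 : 0 <= K by rewrite -lee_fin -KE; apply: integral_ge0 => x _; rewrite lee_fin powR_ge0.
have KMr : K <= Mr by rewrite -lee_fin -KE -MrE.
set m := fine (mu E).
have mEq : mu E = m%:E by rewrite /m fineK // fin_num_measure.
have m0 : 0 <= m by rewrite -lee_fin -mEq measure_ge0.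
have mb : m <= b by rewrite -lee_fin -mEq.
have H := @holder_event R _ _ mu gp E alpha K m mgp mE a1 gp0 KE mEq.
set p := fine (Pr E).
have pE : Pr E = p%:E by rewrite /p fineK // fin_num_measure.
have a0 : 0 < alpha by lra.
have ia : 0 <= 1 - alpha^-1 by rewrite subr_ge0 invf_le1 // ltW.
have hp : p <= Mr `^ alpha^-1 * b `^ (1 - alpha^-1).
  have h1 : p <= K `^ alpha^-1 * m `^ (1 - alpha^-1) by rewrite -lee_fin -pE (le_trans PE H).
  apply: (le_trans h1); apply: ler_pM.
  - exact: powR_ge0.
  - exact: powR_ge0.
  - by apply: ge0_ler_powR => //; rewrite ?nnegrE ?invr_ge0; lra.
  - by apply: ge0_ler_powR => //; rewrite ?nnegrE; lra.
have Mr0 : 0 < Mr.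
  rewrite lt_neqAle (le_trans K0 KMr) andbT; apply/negP => /eqP M0'.
  have z : Mr `^ alpha^-1 = 0 by rewrite -M0' powR0 // invr_eq0 gt_eqF.
  move: hp; rewrite z mul0r => hp.
  have : 0 < p by [].
  lra.
rewrite /= MrE lne_EFin // -EFinM lee_fin.
have hl : ln p <= alpha^-1 * ln Mr + (1 - alpha^-1) * ln b.
  rewrite -!ln_powR -lnM ?posrE ?powR_gt0 //.
  by rewrite ler_ln ?posrE ?mulr_gt0 ?powR_gt0.
have e1 : alpha / (alpha - 1) * (alpha^-1 * ln Mr + (1 - alpha^-1) * ln b) = (alpha - 1)^-1 * ln Mr + ln b.
  field; rewrite ?gt_eqF // subr_gt0 //.
rewrite lerBlDr -e1.
by apply: ler_wpM2l; [rewrite divr_ge0 // ?subr_ge0 ltW | ].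
Qed.

End Helpers.
Import Helpers.
Import Order.TTheory GRing.Theory Num.Theory.
Local Open Scope classical_set_scope.
Local Open Scope ring_scope.

Theorem corollary5 (R : realType)
  (dX dY dH : measure_display)
  (X : measurableType dX) (Y : measurableType dY) (Hty : measurableType dH)
  (hyp : Hty -> X -> Y)
  (P : probability (X * Y)%type R)
  (n : nat)
  (Pn : probability (n.-tuple (X * Y)%type) R)
  (HPn : forall A : 'I_n -> set (X * Y)%type, (forall i, measurable (A i)) ->
     Pn [set s | forall i, A i (tnth s i)] = (\prod_(i < n) P (A i))%E)
  (K : R.-pker (n.-tuple (X * Y)%type) ~> Hty)
  (PSH : probability (n.-tuple (X * Y)%type * Hty)%type R)
  (HPSH : forall C, measurable C -> PSH C = (\int[Pn]_s K s (xsection C s))%E)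
  (PH : probability Hty R)
  (HPH : forall B, measurable B -> PH B = PSH ([set: n.-tuple (X * Y)%type] `*` B))
  (Hac : PSH `<< (Pn \x PH)%E)
  (Herr : forall h, measurable (err01 hyp h))
  (eta : R) (Heta : 0 < eta < 1)
  (HE : measurable (gap_event (n:=n) P (err01 hyp) eta))
  (alpha delta : R) (Halpha : 1 < alpha) (Hdelta : 0 < delta < 1) :
  ((sibson_mi alpha Pn PSH + (ln 2 + alpha / (alpha - 1) * ln delta^-1)%:E)
      * ((2 * eta ^+ 2)^-1)%:E <= (n%:R)%:E)%E ->
  (PSH (gap_event (n:=n) P (err01 hyp) eta) <= delta%:E)%E.
Proof.
move=> Hmain.
have [eta0 eta1] := andP Heta.
have [d0 d1] := andP Hdelta.
set E := gap_event (n:=n) P (err01 hyp) eta in HE Hmain *.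
set b := 2 * expR (- (2 * n%:R * eta ^+ 2)).
have b0 : 0 < b by rewrite mulr_gt0 // expR_gt0.
have sec h : (Pn (ysection E h) <= b%:E)%E.
  have -> : ysection E h = [set s | (eta < `|fine (P (err01 hyp h)) - (\sum_(i < n) (`[< err01 hyp h (tnth s i) >] : nat)%:R) / n%:R|)%R].
    by apply/seteqP; split => s; rewrite /ysection /= inE.
  apply: (@section_bound R _ (X * Y)%type P n Pn HPn (err01 hyp h) (Herr h) eta eta0).
  have := measurable_ysection h HE.
  have -> // : ysection E h = [set s | (eta < `|fine (P (err01 hyp h)) - (\sum_(i < n) (`[< err01 hyp h (tnth s i) >] : nat)%:R) / n%:R|)%R].
  by apply/seteqP; split => s; rewrite /ysection /= inE.
have prod (Q : probability Hty R) : ((Pn \x Q) E <= b%:E)%E.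
  exact: prod_bound HE sec.
set p := fine (PSH E).
have pE : PSH E = p%:E by rewrite /p fineK // fin_num_measure.
rewrite pE lee_fin leNgt; apply/negP => dp.
have p0 : 0 < p by lra.
have a0 : 0 < alpha by lra.
set L := alpha / (alpha - 1) * ln p - ln b.
have lb : (L%:E <= sibson_mi alpha Pn PSH)%E.
  apply/ereal_infP => _ [Q _ <-].
  apply: renyi_lb; [exact: HE | exact: Halpha | exact: b0 | exact: prod | exact: p0].
have g0 : 0 < alpha / (alpha - 1) by rewrite divr_gt0 // subr_gt0.
have k0 : 0 < 2 * eta ^+ 2 by rewrite mulr_gt0 // exprn_gt0.
move: Hmain lb; case: (sibson_mi alpha Pn PSH) => [i| |] Hm lbi; last first.
- by move: lbi; rewrite leeNy_eq.
- by move: Hm; rewrite addye // mulyr gtr0_sg ?invr_gt0 // mul1e leye_eq.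
move: Hm lbi; rewrite -EFinD -EFinM !lee_fin ler_pdivrMr // => Hm lbi.
have lnb : ln b = ln 2 - 2 * n%:R * eta ^+ 2.
  by rewrite /b lnM ?posrE ?expR_gt0 // expRK.
have lnd : ln delta^-1 = - ln delta by rewrite lnV ?posrE.
move: lbi Hm; rewrite /L lnb lnd => lbi Hm.
have : alpha / (alpha - 1) * ln p <= alpha / (alpha - 1) * ln delta.
  have e : alpha / (alpha - 1) * - ln delta = - (alpha / (alpha - 1) * ln delta) by rewrite mulrN.
  rewrite e in Hm; lra.
rewrite ler_pM2l // ler_ln ?posrE //; lra.
Qed.
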